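(* Let $\mathbf a=\{a_1,\dots,a_A\}$, $\mathbf c=\{c_1,\dots,c_C\}$, $d_1,d_2\in\mathbb C\setminus\{0\}$ with $d_2/d_1\notin\{q^m:m\in\mathbb Z\}$, $d_1\mathbf c$ and $d_2\mathbf c$ disjoint from $\Omega_q$, and generic so that all quantities below are defined, and let $s\in\mathbb C\setminus\{0\}$. Fix a square root $\sqrt{d_1/d_2}$ and put $\sqrt{d_2/d_1}:=1/\sqrt{d_1/d_2}$, $\sqrt{d_1d_2}:=d_1\sqrt{d_2/d_1}$. With $$H(\mathbf a,\mathbf c,\{d_1,d_2\};q):=\mathop{\mathrm{Sym}}_{d_1;d_2}\frac{(d_1\mathbf a;q)_\infty}{(d_2/d_1,d_1\mathbf c;q)_\infty}{}_{C}\phi_{A+1}^{\,C-A-2}\!\left(\begin{matrix}d_1\mathbf c\\ d_1\mathbf a,\ qd_1/d_2\end{matrix};q,q\right),$$ one has $$H(\mathbf a,\mathbf c,\{d_1,d_2\};q)=\frac{\sqrt{d_2/d_1}}{(1-q)s(q;q)_\infty\vartheta(d_2/d_1;q)}\int_{s\sqrt{d_2/d_1}}^{s\sqrt{d_1/d_2}}\frac{\big((q\sqrt{d_1/d_2},q\sqrt{d_2/d_1},\mathbf a\sqrt{d_1d_2})\tfrac us;q\big)_\infty}{\big(\mathbf c\sqrt{d_1d_2}\tfrac us;q\big)_\infty}\,d_qu,$$ and the right-hand side is symmetric under interchanging $d_1$ and $d_2$.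
   Context: $q\in\mathbb C$, $0<|q|<1$; $q$-shifted factorials $(a;q)_n$, $(a;q)_\infty$, products of several; a list as entry stands for all its elements, $x\mathbf a=\{xa_i\}$, $(\mathbf u y;q)_\infty=\prod_i(u_iy;q)_\infty$. $\Omega_q=\{q^{-k}:k\in\mathbb N_0\}$. $\vartheta(x;q)=(x,q/x;q)_\infty$. $\mathop{\mathrm{Sym}}_{d_1;d_2}F(d_1,d_2)=F(d_1,d_2)+F(d_2,d_1)$. Basic hypergeometric series ${}_{r+1}\phi_s=\sum_{k\ge0}\frac{(a_1,\dots,a_{r+1};q)_k}{(q,b_1,\dots,b_s;q)_k}((-1)^kq^{\binom k2})^{s-r}z^k$; ${}_{r+1}\phi_s^{\,-p}$ ($p\in\mathbb N_0$) adds $p$ numerator parameters $0$, ${}_{r+1}\phi_s^{\,p}$ adds $p$ denominator parameters $0$. Jackson $q$-integral: $\int_\alpha^\beta g(u)\,d_qu=(1-q)\beta\sum_{n\ge0}q^ng(q^n\beta)-(1-q)\alpha\sum_{n\ge0}q^ng(q^n\alpha)$. *)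

(* Defs.v *)
From Stdlib Require Import Reals ZArith List.
From Coquelicot Require Import Coquelicot.
Import ListNotations.
Open Scope C_scope.

(* limit of a C-valued sequence (total operator; meaningful when it converges) *)
Definition seq_lim (u : nat -> C) : C :=
  @lim C_CompleteNormedModule (filtermap u eventually).

Fixpoint psum (f : nat -> C) (n : nat) : C :=
  match n with O => 0 | S m => psum f m + f m end.

Definition series (f : nat -> C) : C := seq_lim (psum f).

Fixpoint qpoch (a q : C) (n : nat) : C :=
  match n with O => 1 | S m => qpoch a q m * (1 - a * q ^ m) end.

Definition qpoch_inf (a q : C) : C := seq_lim (qpoch a q).

Definition qpochs (l : list C) (q : C) (n : nat) : C :=
  fold_right (fun x acc => qpoch x q n * acc) 1 l.
Definition qpochs_inf (l : list C) (q : C) : C :=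
  fold_right (fun x acc => qpoch_inf x q * acc) 1 l.

Definition zpow (x : C) (m : Z) : C :=
  match m with
  | Z0 => 1
  | Zpos p => x ^ Pos.to_nat p
  | Zneg p => / (x ^ Pos.to_nat p)
  end.

Definition in_Omega (q x : C) : Prop := exists k : nat, x = / (q ^ k).

Definition qtheta (x q : C) : C := qpoch_inf x q * qpoch_inf (q / x) q.

(* basic hypergeometric series r+1 phi s with superscript e (an integer):
   superscript p >= 0 adds p zero denominator parameters, superscript -p adds
   p zero numerator parameters.  With r+1 = size nums and s = size dens
   (before adding zeros), the exponent s' - r' of ((-1)^k q^(k choose 2))
   equals  size dens - size nums + 1 + e. *)
Definition phi_gen (nums dens : list C) (e : Z) (q z : C) : C :=
  let ex := (Z.of_nat (length dens) - Z.of_nat (length nums) + 1 + e)%Z in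
  series (fun k =>
    qpochs nums q k / (qpoch q q k * qpochs dens q k)
    * zpow ((-1) ^ k * q ^ (Nat.div (k * (k - 1)) 2)) ex * z ^ k).

Definition jackson (q : C) (g : C -> C) (alpha beta : C) : C :=
  (1 - q) * beta * series (fun n => q ^ n * g (q ^ n * beta))
  - (1 - q) * alpha * series (fun n => q ^ n * g (q ^ n * alpha)).

Definition H_term (a c : list C) (d1 d2 q : C) : C :=
  qpochs_inf (map (fun x => d1 * x) a) q
  / (qpoch_inf (d2 / d1) q * qpochs_inf (map (fun x => d1 * x) c) q)
  * phi_gen (map (fun x => d1 * x) c)
            (map (fun x => d1 * x) a ++ [q * d1 / d2])
            (Z.of_nat (length c) - Z.of_nat (length a) - 2)%Z q q.

Definition H (a c : list C) (d1 d2 q : C) : C :=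
  H_term a c d1 d2 q + H_term a c d2 d1 q.

(* right-hand side, with r the fixed square root of d1/d2:
   sqrt(d1/d2) = r, sqrt(d2/d1) = 1/r, sqrt(d1 d2) = d1 * (1/r) *)
Definition RHS (a c : list C) (d1 d2 r s q : C) : C :=
  let r' := / r in
  let sq := d1 * r' in
  r' / ((1 - q) * s * qpoch_inf q q * qtheta (d2 / d1) q)
  * jackson q
      (fun u => qpochs_inf (map (fun x => x * (u / s))
                                ([q * r; q * r'] ++ map (fun x => x * sq) a)) q
                / qpochs_inf (map (fun x => x * sq * (u / s)) c) q)
      (s * r') (s * r).

(* Main.v *)
Require Import Defs.
From Stdlib Require Import Reals ZArith List Lra Lia.
From Coquelicot Require Import Coquelicot.
Open Scope C_scope.

Definition conv (u : nat -> C) (l : C) : Prop :=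
  forall eps : R, (0 < eps)%R -> exists N, forall n, (N <= n)%nat -> (Cmod (u n - l) < eps)%R.

Lemma conv_filterlim u l : conv u l -> filterlim u eventually (locally l).
Proof.
  intros H P [eps Heps]. destruct (H eps (cond_pos eps)) as [N HN].
  exists N. intros n Hn. apply Heps.
  apply (@norm_compat1 C_AbsRing C_NormedModule). apply HN; lia.
Qed.

Lemma filterlim_conv u l : filterlim u eventually (locally l) -> conv u l.
Proof.
  intros H eps Heps.
  assert (Hf : (0 < eps / (@norm_factor C_AbsRing C_NormedModule))%R).
  { apply Rdiv_lt_0_compat; [lra| apply norm_factor_gt_0]. }
  destruct (H _ (locally_ball l (mkposreal _ Hf))) as [N HN].
  exists N. intros n Hn. specialize (HN n Hn).
  apply (@norm_compat2 C_AbsRing C_NormedModule) in HN. simpl in HN.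
  change (Cmod (u n - l) < eps)%R.
  assert (E : @norm C_AbsRing C_NormedModule (@minus C_NormedModule (u n) l) = Cmod (u n - l)) by reflexivity.
  rewrite <- E.
  eapply Rlt_le_trans. exact HN. right. field.
  apply Rgt_not_eq, norm_factor_gt_0.
Qed.

Lemma conv_seq_lim u l : conv u l -> seq_lim u = l.
Proof.
  intros H. apply conv_filterlim in H. unfold seq_lim.
  set (F := filtermap u eventually).
  assert (PF : ProperFilter F) by (apply filtermap_proper_filter; apply eventually_filter).
  apply (@is_filter_lim_unique C_AbsRing C_NormedModule F).
  - apply Proper_StrongProper; exact PF.
  - intros P [eps Heps]. 
    assert (Hc : cauchy F).
    { intros e. exists l. apply H. apply locally_ball. }
    pose proof (@complete_cauchy C_CompleteNormedModule F PF Hc eps) as K.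
    eapply filter_imp; [|exact K]. intros x Hx. apply Heps. exact Hx.
  - exact H.
Qed.
Lemma Cmod_sub_sym x y : Cmod (x - y) = Cmod (y - x).
Proof. replace (x - y) with (- (y - x)) by ring. apply Cmod_opp. Qed.

Lemma Cmod_tri3 x y z : (Cmod (x - z) <= Cmod (x - y) + Cmod (y - z))%R.
Proof. replace (x - z) with ((x - y) + (y - z)) by ring. apply Cmod_triangle. Qed.

Lemma tail_bound (u : nat -> C) (B rho : R) :
  (0 <= rho < 1)%R -> (forall n, Cmod (u (S n) - u n) <= B * rho ^ n)%R ->
  forall n k, ((1 - rho) * Cmod (u (n + k)%nat - u n) <= B * rho ^ n * (1 - rho ^ k))%R.
Proof.
  intros Hr Hu n k. induction k as [|k IH].
  - rewrite Nat.add_0_r. replace (u n - u n) with (RtoC 0) by ring. rewrite Cmod_0. simpl. lra.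
  - rewrite Nat.add_succ_r.
    pose proof (Cmod_tri3 (u (S (n + k))) (u (n+k)%nat) (u n)) as T.
    pose proof (Hu (n+k)%nat) as Hk. rewrite pow_add in Hk.
    assert (0 <= 1 - rho)%R by lra.
    apply Rle_trans with ((1-rho) * (B * (rho ^ n * rho ^ k) + Cmod (u (n + k)%nat - u n)))%R.
    + apply Rmult_le_compat_l; lra.
    + simpl. nra.
Qed.

Lemma cauchy_geom (u : nat -> C) (B rho : R) :
  (0 <= rho < 1)%R -> (forall n, Cmod (u (S n) - u n) <= B * rho ^ n)%R ->
  exists l, filterlim u eventually (locally l).
Proof.
  intros Hr Hu.
  assert (HB : (0 <= B)%R).
  { specialize (Hu 0%nat). simpl in Hu. pose proof (Cmod_ge_0 (u 1%nat - u 0%nat)). lra. }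
  apply (@filterlim_locally_cauchy nat C_CompleteNormedModule eventually).
  { apply eventually_filter. }
  intros eps.
  assert (Hp : (0 < eps * (1 - rho) / (2 * (B + 1)))%R).
  { apply Rdiv_lt_0_compat. apply Rmult_lt_0_compat; [apply cond_pos|lra]. lra. }
  assert (Habs : (Rabs rho < 1)%R) by (rewrite Rabs_right; lra).
  destruct (pow_lt_1_zero rho Habs _ Hp) as [N HN].
  exists (fun n => (N <= n)%nat). split.
  - exists N. auto.
  - intros x y Hx Hy.
    apply (@norm_compat1 C_AbsRing C_NormedModule).
    change (Cmod (u y - u x) < eps)%R.
    assert (T : forall z, (N <= z)%nat -> ((1 - rho) * Cmod (u z - u N) <= B * rho ^ N)%R).
    { intros z Hz. replace z with (N + (z - N))%nat by lia.
      pose proof (tail_bound u B rho Hr Hu N (z - N)%nat).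
      pose proof (pow_le rho (z - N)%nat (proj1 Hr)).
      pose proof (pow_le rho N (proj1 Hr)).
      assert (0 <= B * rho ^ N * rho ^ (z - N))%R by (repeat apply Rmult_le_pos; auto).
      lra. }
    pose proof (T x Hx). pose proof (T y Hy).
    pose proof (Cmod_tri3 (u y) (u N) (u x)). rewrite (Cmod_sub_sym (u N) (u x)) in H1.
    specialize (HN N (le_n _)). rewrite Rabs_right in HN by (apply Rle_ge, pow_le; lra).
    assert (Hpos: (0 < 1 - rho)%R) by lra.
    assert (E : (B * rho ^ N < eps * (1 - rho) / 2)%R).
    { assert (Ey : (eps * (1 - rho) / (2 * (B + 1)) * (2 * (B + 1)) = eps * (1 - rho))%R) by (field; lra).
      pose proof (pow_le rho N (proj1 Hr)).
      set (yy := (eps * (1 - rho) / (2 * (B + 1)))%R) in *. nra. }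
    pose proof (cond_pos eps).
    apply Rmult_lt_reg_l with (1 - rho)%R. lra. assert ((1 - rho) * Cmod (u y - u x) <= (1 - rho) * (Cmod (u y - u N) + Cmod (u x - u N)))%R
      by (apply Rmult_le_compat_l; lra). lra.
Qed.

Lemma conv_scal u l K : conv u l -> conv (fun n => K * u n) (K * l).
Proof.
  intros H eps Heps.
  destruct (H (eps / (Cmod K + 1))%R) as [N HN].
  { apply Rdiv_lt_0_compat; [lra|]. pose proof (Cmod_ge_0 K). lra. }
  exists N. intros n Hn. specialize (HN n Hn).
  replace (K * u n - K * l) with (K * (u n - l)) by ring. rewrite Cmod_mult.
  pose proof (Cmod_ge_0 K). pose proof (Cmod_ge_0 (u n - l)).
  assert (E : (eps / (Cmod K + 1) * (Cmod K + 1) = eps)%R) by (field; lra).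
  set (y := (eps / (Cmod K + 1))%R) in *. nra.
Qed.

Lemma conv_shift u l n : conv u l -> conv (fun m => u (n + m)%nat) l.
Proof.
  intros H eps Heps. destruct (H eps Heps) as [N HN]. exists N. intros m Hm. apply HN. lia.
Qed.

Lemma conv_lower u l (d : R) : conv u l -> (forall n, d <= Cmod (u n))%R -> (d <= Cmod l)%R.
Proof.
  intros H Hd. destruct (Rle_or_lt d (Cmod l)) as [|Hlt]; auto.
  destruct (H (d - Cmod l)%R) as [N HN]; [lra|].
  specialize (HN N (le_n _)). specialize (Hd N).
  pose proof (Cmod_tri3 (u N) l 0). replace (u N - 0) with (u N) in H0 by ring. replace (l - 0) with l in H0 by ring. lra.
Qed.

Lemma psum_S f n : psum f (S n) = psum f n + f n.
Proof. reflexivity. Qed.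

Lemma series_conv (f : nat -> C) (B rho : R) :
  (0 <= rho < 1)%R -> (forall n, Cmod (f n) <= B * rho ^ n)%R -> exists l, conv (psum f) l.
Proof.
  intros Hr Hf. destruct (cauchy_geom (psum f) B rho Hr) as [l Hl].
  { intros n. rewrite psum_S. replace (psum f n + f n - psum f n) with (f n) by ring. auto. }
  exists l. apply filterlim_conv. exact Hl.
Qed.

Lemma psum_scal f K n : psum (fun k => K * f k) n = K * psum f n.
Proof. induction n; simpl. ring. rewrite IHn. ring. Qed.

Lemma series_scal f K l : conv (psum f) l -> series (fun k => K * f k) = K * series f.
Proof.
  intros H. unfold series.
  rewrite (conv_seq_lim _ _ H).
  apply conv_seq_lim.
  replace (psum (fun k => K * f k)) with (fun n => K * psum f n).
  apply conv_scal; auto.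
  apply FunctionalExtensionality.functional_extensionality. intros n. now rewrite psum_scal.
Qed.

Definition notO (q y : C) : Prop := forall m : nat, 1 - y * q ^ m <> 0.

Lemma qpoch_S x q n : qpoch x q (S n) = qpoch x q n * (1 - x * q ^ n).
Proof. reflexivity. Qed.

Lemma Cmod_1m_upper x : (Cmod (1 - x) <= 1 + Cmod x)%R.
Proof. unfold Cminus. pose proof (Cmod_triangle 1 (- x)). rewrite Cmod_1, Cmod_opp in H. exact H. Qed.

Lemma Cmod_1m_lower x : (1 - Cmod x <= Cmod (1 - x))%R.
Proof. pose proof (Cmod_triangle (1 - x) x). replace (1 - x + x) with (RtoC 1) in H by ring.
  rewrite Cmod_1 in H. lra. Qed.

Lemma qpoch_bound x q : (Cmod q < 1)%R -> exists B, forall n, (Cmod (qpoch x q n) <= B)%R.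
Proof.
  intros Hq. set (rho := Cmod q). pose proof (Cmod_ge_0 q). pose proof (Cmod_ge_0 x).
  assert (Hn : forall n, (Cmod (qpoch x q n) <= exp (Cmod x * (1 - rho ^ n) / (1 - rho)))%R).
  { induction n.
    - simpl. rewrite Cmod_1. replace (Cmod x * (1 - 1) / (1 - rho))%R with 0%R by (field; unfold rho; lra).
      rewrite exp_0. lra.
    - rewrite qpoch_S, Cmod_mult.
      pose proof (Cmod_1m_upper (x * q ^ n)). rewrite Cmod_mult, Cmod_pow in H1.
      fold rho in H1.
      pose proof (exp_ineq1_le (Cmod x * rho ^ n)).
      apply Rle_trans with (exp (Cmod x * (1 - rho ^ n) / (1 - rho)) * exp (Cmod x * rho ^ n))%R.
      + apply Rmult_le_compat; auto using Cmod_ge_0. lra.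
      + rewrite <- exp_plus. right. f_equal. simpl. field. unfold rho; lra. }
  exists (exp (Cmod x / (1 - rho))). intros n. eapply Rle_trans; [apply Hn|].
  destruct (Req_dec (Cmod x * (1 - rho ^ n) / (1 - rho)) (Cmod x / (1 - rho))) as [E|E].
  { rewrite E. lra. }
  left. apply exp_increasing.
  assert (0 <= rho ^ n)%R by (apply pow_le; auto).
  assert (0 < 1 - rho)%R by (unfold rho; lra).
  unfold Rdiv. apply Rmult_lt_compat_r. apply Rinv_0_lt_compat; lra.
  assert (Cmod x * (1 - rho ^ n) <= Cmod x)%R by nra.
  destruct H3; auto. exfalso. apply E. rewrite H3. reflexivity.
Qed.

Lemma qpoch_conv x q : (Cmod q < 1)%R -> exists L, conv (qpoch x q) L.
Proof.
  intros Hq. destruct (qpoch_bound x q Hq) as [B HB].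
  destruct (cauchy_geom (qpoch x q) (B * Cmod x) (Cmod q)) as [l Hl].
  { split; auto using Cmod_ge_0. }
  { intros n. rewrite qpoch_S.
    replace (qpoch x q n * (1 - x * q ^ n) - qpoch x q n) with (- (qpoch x q n * x * q ^ n)) by ring.
    rewrite Cmod_opp, !Cmod_mult, Cmod_pow.
    pose proof (Cmod_ge_0 x). pose proof (pow_le (Cmod q) n (Cmod_ge_0 q)).
    specialize (HB n). rewrite !Rmult_assoc. apply Rmult_le_compat_r; [|exact HB]. apply Rmult_le_pos; auto. }
  exists l. apply filterlim_conv; auto.
Qed.

Lemma qpoch_inf_conv x q : (Cmod q < 1)%R -> conv (qpoch x q) (qpoch_inf x q).
Proof.
  intros Hq. destruct (qpoch_conv x q Hq) as [L HL]. unfold qpoch_inf.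
  rewrite (conv_seq_lim _ _ HL). exact HL.
Qed.

Lemma qpoch_nz x q : notO q x -> forall n, qpoch x q n <> 0.
Proof.
  intros H n. induction n; simpl.
  - exact C1_nz.
  - apply Cmult_neq_0; auto.
Qed.

Lemma qpoch_split y q n m : qpoch y q (n + m) = qpoch y q n * qpoch (y * q ^ n) q m.
Proof.
  induction m.
  - rewrite Nat.add_0_r. simpl. ring.
  - rewrite Nat.add_succ_r, !qpoch_S, IHm, Cpow_add_r. ring.
Qed.

Lemma pow_le1 (x : R) (n : nat) : (0 <= x)%R -> (x <= 1)%R -> (x ^ n <= 1)%R.
Proof. intros H0 H1. induction n; simpl. lra. pose proof (pow_le x n H0). nra. Qed.

Lemma qpoch_lower x q : (Cmod q < 1)%R -> notO q x ->
  exists d, (0 < d)%R /\ forall n, (d <= Cmod (qpoch x q n))%R.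
Proof.
  intros Hq Hx. set (rho := Cmod q). pose proof (Cmod_ge_0 q). pose proof (Cmod_ge_0 x).
  assert (Hr1 : (0 < 1 - rho)%R) by (unfold rho; lra).
  assert (Habs : (Rabs rho < 1)%R) by (rewrite Rabs_right; unfold rho; lra).
  assert (Hp : (0 < (1 - rho) / (2 * (Cmod x + 1)))%R) by (apply Rdiv_lt_0_compat; lra).
  destruct (pow_lt_1_zero rho Habs _ Hp) as [M HM].
  specialize (HM M (le_n _)). rewrite Rabs_right in HM by (apply Rle_ge, pow_le; unfold rho; lra).
  assert (HxM : (Cmod x * rho ^ M <= (1 - rho) / 2)%R).
  { assert (E : ((1 - rho) / (2 * (Cmod x + 1)) * (2 * (Cmod x + 1)) = 1 - rho)%R) by (field; lra).
    pose proof (pow_le rho M H).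
    set (yy := ((1 - rho) / (2 * (Cmod x + 1)))%R) in *. nra. }
  assert (Ht : forall k, ((1 - rho) * Cmod (qpoch x q (M + k)) >=
                         Cmod (qpoch x q M) * ((1 - rho) - Cmod x * rho ^ M * (1 - rho ^ k)))%R).
  { induction k.
    - rewrite Nat.add_0_r. simpl. lra.
    - rewrite Nat.add_succ_r, qpoch_S, Cmod_mult.
      pose proof (Cmod_1m_lower (x * q ^ (M + k))). rewrite Cmod_mult, Cmod_pow in H1. fold rho in H1.
      rewrite pow_add in H1.
      assert (0 <= rho ^ k <= 1)%R by (split; [apply pow_le; unfold rho; lra | apply pow_le1; unfold rho; lra]).
      assert (0 <= rho ^ M)%R by (apply pow_le; unfold rho; lra).
      assert (0 <= Cmod x * rho ^ M * rho ^ k <= (1 - rho) / 2)%R.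
      { split. repeat apply Rmult_le_pos; lra. nra. }
      assert (0 <= 1 - Cmod x * (rho ^ M * rho ^ k))%R by (rewrite <- Rmult_assoc; unfold rho in *; lra).
      pose proof (Cmod_ge_0 (qpoch x q M)). pose proof (Cmod_ge_0 (qpoch x q (M + k))).
      simpl.
      apply Rle_ge.
      apply Rle_trans with ((1 - rho) * Cmod (qpoch x q (M + k)) * (1 - Cmod x * (rho ^ M * rho ^ k)))%R.
      2:{ rewrite Rmult_assoc. apply Rmult_le_compat_l; [lra|]. apply Rmult_le_compat_l; lra. }
      apply Rle_trans with (Cmod (qpoch x q M) * (1 - rho - Cmod x * rho ^ M * (1 - rho ^ k)) * (1 - Cmod x * (rho ^ M * rho ^ k)))%R.
      2:{ apply Rmult_le_compat_r; lra. }
      assert (0 <= Cmod x * rho ^ M * (1 - rho^k))%R by (apply Rmult_le_pos; [apply Rmult_le_pos|]; lra).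
      assert (0 <= Cmod (qpoch x q M) * (Cmod x * rho ^ M * (1 - rho^k)) * (Cmod x * (rho ^ M * rho ^ k)))%R
        by (apply Rmult_le_pos; [apply Rmult_le_pos|]; lra).
      match goal with |- (?L <= ?R)%R => assert (R - L = Cmod (qpoch x q M) * (Cmod x * rho ^ M * (1 - rho^k)) * (Cmod x * (rho ^ M * rho ^ k)))%R by ring end.
      lra. }
  assert (Hh : forall K, exists d, (0 < d)%R /\ forall n, (n <= K)%nat -> (d <= Cmod (qpoch x q n))%R).
  { induction K.
    - exists 1%R. split; [lra|]. intros n Hn. replace n with 0%nat by lia. simpl. rewrite Cmod_1. lra.
    - destruct IHK as [d [Hd Hn]].
      pose proof (qpoch_nz x q Hx (S K)) as Hnz.
      assert (0 < Cmod (qpoch x q (S K)))%R.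
      { destruct (Cmod_ge_0 (qpoch x q (S K))); auto. exfalso. apply Hnz. apply Cmod_eq_0. auto. }
      exists (Rmin d (Cmod (qpoch x q (S K)))). split. apply Rmin_pos; auto.
      intros n Hn'. destruct (Nat.eq_dec n (S K)). subst. apply Rmin_r.
      eapply Rle_trans. apply Rmin_l. apply Hn. lia. }
  destruct (Hh M) as [d [Hd Hdn]].
  exists (d / 2)%R. split; [lra|]. intros n.
  destruct (Nat.le_gt_cases n M). { pose proof (Hdn n H1). lra. }
  replace n with (M + (n - M))%nat by lia.
  specialize (Ht (n - M)%nat). specialize (Hdn M (le_n _)).
  assert (0 <= rho ^ (n - M) <= 1)%R by (split; [apply pow_le; unfold rho; lra | apply pow_le1; unfold rho; lra]).
  assert (Cmod x * rho ^ M * (1 - rho ^ (n - M)) <= (1 - rho) / 2)%R.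
  { assert (0 <= Cmod x * rho ^ M)%R by (apply Rmult_le_pos; [lra| apply pow_le; unfold rho; lra]). nra. }
  assert ((1 - rho) * (d/2) <= (1 - rho) * Cmod (qpoch x q (M + (n - M))))%R by nra.
  apply Rmult_le_reg_l with (1 - rho)%R; lra.
Qed.

Lemma conv_ext u v l : (forall n, u n = v n) -> conv u l -> conv v l.
Proof. intros E H eps He. destruct (H eps He) as [N HN]. exists N. intros n Hn. rewrite <- E. auto. Qed.

Lemma Cmod_pos_of_nz (z : C) : z <> 0 -> (0 < Cmod z)%R.
Proof. intros H. destruct (Cmod_ge_0 z); auto. exfalso. apply H, Cmod_eq_0. auto. Qed.

Lemma nz_of_Cmod_pos (z : C) : (0 < Cmod z)%R -> z <> 0.
Proof. intros H E. rewrite E, Cmod_0 in H. lra. Qed.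

Lemma qpoch_inf_nz x q : (Cmod q < 1)%R -> notO q x -> qpoch_inf x q <> 0.
Proof.
  intros Hq Hx. destruct (qpoch_lower x q Hq Hx) as [d [Hd Hn]].
  apply nz_of_Cmod_pos. pose proof (conv_lower _ _ d (qpoch_inf_conv x q Hq) Hn). lra.
Qed.

Lemma qpoch_inf_shift y q n : (Cmod q < 1)%R -> notO q y ->
  qpoch_inf (y * q ^ n) q = qpoch_inf y q / qpoch y q n.
Proof.
  intros Hq Hy. pose proof (qpoch_nz y q Hy n) as Hn.
  unfold qpoch_inf at 1. apply conv_seq_lim.
  apply conv_ext with (fun m => / qpoch y q n * qpoch y q (n + m)%nat).
  { intros m. rewrite qpoch_split. field. auto. }
  unfold Cdiv. rewrite Cmult_comm. apply conv_scal.
  apply (conv_shift (qpoch y q)). apply qpoch_inf_conv; auto.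
Qed.

Lemma qpochs_app l1 l2 q n : qpochs (l1 ++ l2) q n = qpochs l1 q n * qpochs l2 q n.
Proof. induction l1; simpl. ring. unfold qpochs in *. simpl. rewrite IHl1. ring. Qed.

Lemma qpochs_inf_app l1 l2 q : qpochs_inf (l1 ++ l2) q = qpochs_inf l1 q * qpochs_inf l2 q.
Proof. induction l1; simpl. ring. unfold qpochs_inf in *. simpl. rewrite IHl1. ring. Qed.

Lemma qpochs_cons x l q n : qpochs (x :: l) q n = qpoch x q n * qpochs l q n.
Proof. reflexivity. Qed.
Lemma qpochs_inf_cons x l q : qpochs_inf (x :: l) q = qpoch_inf x q * qpochs_inf l q.
Proof. reflexivity. Qed.
Lemma qpochs_nil q n : qpochs nil q n = 1.
Proof. reflexivity. Qed.
Lemma qpochs_inf_nil q : qpochs_inf nil q = 1.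
Proof. reflexivity. Qed.

Lemma qpochs_nz l q n : List.Forall (notO q) l -> qpochs l q n <> 0.
Proof.
  induction 1. exact C1_nz. rewrite qpochs_cons. apply Cmult_neq_0; auto. apply qpoch_nz; auto.
Qed.

Lemma qpochs_inf_nz l q : (Cmod q < 1)%R -> List.Forall (notO q) l -> qpochs_inf l q <> 0.
Proof.
  intros Hq. induction 1. exact C1_nz. rewrite qpochs_inf_cons. apply Cmult_neq_0; auto. apply qpoch_inf_nz; auto.
Qed.

Lemma qpochs_bound l q : (Cmod q < 1)%R -> exists B, forall n, (Cmod (qpochs l q n) <= B)%R.
Proof.
  intros Hq. induction l.
  - exists 1%R. intros n. rewrite qpochs_nil, Cmod_1. lra.
  - destruct IHl as [B HB]. destruct (qpoch_bound a q Hq) as [B1 HB1].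
    exists (B1 * B)%R. intros n. rewrite qpochs_cons, Cmod_mult.
    apply Rmult_le_compat; auto using Cmod_ge_0.
Qed.

Lemma qpochs_lower l q : (Cmod q < 1)%R -> List.Forall (notO q) l ->
  exists d, (0 < d)%R /\ forall n, (d <= Cmod (qpochs l q n))%R.
Proof.
  intros Hq. induction 1.
  - exists 1%R. split. lra. intros n. rewrite qpochs_nil, Cmod_1. lra.
  - destruct IHForall as [d [Hd Hn]]. destruct (qpoch_lower x q Hq H) as [d1 [Hd1 Hn1]].
    exists (d1 * d)%R. split. apply Rmult_lt_0_compat; auto.
    intros n. rewrite qpochs_cons, Cmod_mult. apply Rmult_le_compat; auto; lra.
Qed.

Lemma qpochs_inf_shift l q n : (Cmod q < 1)%R -> List.Forall (notO q) l ->
  qpochs_inf (map (fun y => y * q ^ n) l) q = qpochs_inf l q / qpochs l q n.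
Proof.
  intros Hq. induction 1.
  - unfold qpochs_inf, qpochs; simpl. field.
  - simpl map. rewrite !qpochs_inf_cons, qpochs_cons, IHForall, qpoch_inf_shift; auto.
    field. split; [apply qpochs_nz|apply qpoch_nz]; auto.
Qed.

Lemma term_conv q D Dc : (Cmod q < 1)%R -> List.Forall (notO q) D ->
  exists l, conv (psum (fun n => qpochs Dc q n / qpochs D q n * q ^ n)) l.
Proof.
  intros Hq HD. destruct (qpochs_bound Dc q Hq) as [B HB]. destruct (qpochs_lower D q Hq HD) as [d [Hd Hn]].
  apply (series_conv _ (B / d) (Cmod q)). split; auto using Cmod_ge_0.
  intros n. unfold Cdiv. rewrite !Cmod_mult, Cmod_inv, Cmod_pow by (apply qpochs_nz; auto).
  pose proof (pow_le (Cmod q) n (Cmod_ge_0 q)).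
  apply Rmult_le_compat_r; auto.
  unfold Rdiv. apply Rmult_le_compat; auto using Cmod_ge_0.
  - left. apply Rinv_0_lt_compat. apply Cmod_pos_of_nz, qpochs_nz; auto.
  - apply Rinv_le_contravar; auto.
Qed.

Lemma endpoint (q s t : C) (top cl D Dc : list C) : (Cmod q < 1)%R -> s <> 0 ->
  map (fun x => x * t) top = D -> map (fun x => x * t) cl = Dc ->
  List.Forall (notO q) D -> List.Forall (notO q) Dc ->
  series (fun n => q ^ n * (qpochs_inf (map (fun x => x * (q ^ n * (s * t) / s)) top) q
                             / qpochs_inf (map (fun x => x * (q ^ n * (s * t) / s)) cl) q))
  = qpochs_inf D q / qpochs_inf Dc q * series (fun n => qpochs Dc q n / qpochs D q n * q ^ n).
Proof.
  intros Hq Hs ED EDc HD HDc.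
  destruct (term_conv q D Dc Hq HD) as [l Hl].
  rewrite <- (series_scal _ _ _ Hl). f_equal.
  apply FunctionalExtensionality.functional_extensionality. intros n.
  assert (E1 : map (fun x => x * (q ^ n * (s * t) / s)) top = map (fun y => y * q ^ n) D).
  { rewrite <- ED, map_map. apply map_ext. intros x. field; auto. }
  assert (E2 : map (fun x => x * (q ^ n * (s * t) / s)) cl = map (fun y => y * q ^ n) Dc).
  { rewrite <- EDc, map_map. apply map_ext. intros x. field; auto. }
  rewrite E1, E2, !qpochs_inf_shift by auto.
  pose proof (qpochs_nz D q n HD). pose proof (qpochs_nz Dc q n HDc).
  pose proof (qpochs_inf_nz Dc q Hq HDc).
  field; auto.
Qed.

Lemma phi_gen_eq (nums dens : list C) (e : Z) (q z : C) :
  (Z.of_nat (length dens) - Z.of_nat (length nums) + 1 + e = 0)%Z ->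
  phi_gen nums dens e q z = series (fun k => qpochs nums q k / (qpoch q q k * qpochs dens q k) * z ^ k).
Proof.
  intros H. unfold phi_gen. rewrite H. cbv zeta. f_equal.
  apply FunctionalExtensionality.functional_extensionality. intros k. simpl zpow. ring.
Qed.

Lemma Hterm_eq (a c : list C) (d1 d2 q : C) : q <> 0 ->
  notO q q -> notO q (q * d1 / d2) -> List.Forall (notO q) (map (fun x => d1 * x) a) ->
  H_term a c d1 d2 q =
  qpochs_inf (map (fun x => d1 * x) a) q / (qpoch_inf (d2 / d1) q * qpochs_inf (map (fun x => d1 * x) c) q)
  * series (fun n => qpochs (map (fun x => d1 * x) c) q n
                     / qpochs ((q * d1 / d2) :: q :: map (fun x => d1 * x) a) q n * q ^ n).
Proof.
  intros Hq0 Hqq Hqd Ha. unfold H_term. f_equal.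
  rewrite phi_gen_eq.
  2:{ rewrite length_app, !length_map. simpl length. lia. }
  f_equal. apply FunctionalExtensionality.functional_extensionality. intros n.
  rewrite qpochs_app, !qpochs_cons, qpochs_nil.
  pose proof (qpoch_nz _ _ Hqq n). pose proof (qpoch_nz _ _ Hqd n). pose proof (qpochs_nz _ _ n Ha).
  field. repeat split; auto.
Qed.

Lemma zpow_pos (q : C) (m : nat) : zpow q (Z.of_nat m) = q ^ m.
Proof. destruct m. reflexivity. simpl. rewrite SuccNat2Pos.id_succ. reflexivity. Qed.

Lemma zpow_neg (q : C) (m : nat) : zpow q (- Z.of_nat m) = / q ^ m.
Proof. destruct m. simpl. field. simpl. rewrite SuccNat2Pos.id_succ. reflexivity. Qed.

Lemma notO_q (q : C) : (Cmod q < 1)%R -> notO q q.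
Proof.
  intros Hq m E. assert (E' : q ^ S m = 1).
  { rewrite Cpow_S. replace (q * q ^ m) with (1 - (1 - q * q ^ m)) by ring. rewrite E. ring. }
  apply (f_equal Cmod) in E'. rewrite Cmod_pow, Cmod_1 in E'.
  pose proof (Cmod_ge_0 q). pose proof (pow_le1 (Cmod q) m H ltac:(lra)).
  simpl in E'. pose proof (pow_le (Cmod q) m H). nra.
Qed.

Lemma notO_of (q w : C) : q <> 0 -> (forall m : nat, w <> / q ^ m) -> notO q w.
Proof.
  intros Hq H m E. apply (H m). pose proof (Cpow_nz q m Hq).
  replace w with ((1 - (1 - w * q ^ m)) / q ^ m) by (field; auto). rewrite E. field. auto.
Qed.

Lemma qpoch_inf_step (y q : C) : (Cmod q < 1)%R -> notO q y -> qpoch_inf y q = (1 - y) * qpoch_inf (y * q) q.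
Proof.
  intros Hq Hy. pose proof (qpoch_inf_shift y q 1 Hq Hy) as E. rewrite Cpow_1_r in E. rewrite E.
  assert (H1 : qpoch y q 1 = 1 - y) by (simpl; ring). rewrite H1.
  pose proof (qpoch_nz y q Hy 1) as Hn. rewrite H1 in Hn. field. auto.
Qed.

Lemma qpochs_swap (x y : C) l q n : qpochs (x :: y :: l) q n = qpochs (y :: x :: l) q n.
Proof. rewrite !qpochs_cons. ring. Qed.
Lemma qpochs_inf_swap (x y : C) l q : qpochs_inf (x :: y :: l) q = qpochs_inf (y :: x :: l) q.
Proof. rewrite !qpochs_inf_cons. ring. Qed.

Lemma main_eq (q : C) (a c : list C) (d1 d2 s r : C) :
  q <> 0 -> (Cmod q < 1)%R ->
  d1 <> 0 -> d2 <> 0 ->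
  (forall m : Z, d2 / d1 <> zpow q m) ->
  (forall x, In x c -> notO q (d1 * x) /\ notO q (d2 * x)) ->
  (forall x, In x a -> notO q (d1 * x) /\ notO q (d2 * x)) ->
  s <> 0 ->
  r * r = d1 / d2 ->
  H a c d1 d2 q = RHS a c d1 d2 r s q.
Proof.
  intros Hq0 Hq Hd1 Hd2 Hdd Hc Ha Hs Hr.
  assert (Hd1e : d1 = r * r * d2) by (rewrite Hr; field; auto).
  assert (Hr0 : r <> 0).
  { intros E. apply Hd1. rewrite Hd1e, E. ring. }
  assert (Nq : notO q q) by (apply notO_q; auto).
  assert (N1 : notO q (q * d1 / d2)).
  { apply notO_of; auto. intros m E. apply (Hdd (Z.of_nat (S m))). rewrite zpow_pos, Cpow_S.
    pose proof (Cpow_nz q m Hq0).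
    replace (d2 / d1) with (q / (q * d1 / d2)) by (field; auto). rewrite E. field; auto. }
  assert (N2 : notO q (q * d2 / d1)).
  { apply notO_of; auto. intros m E. apply (Hdd (- Z.of_nat (S m))%Z). rewrite zpow_neg, Cpow_S.
    pose proof (Cpow_nz q m Hq0).
    replace (d2 / d1) with ((q * d2 / d1) / q) by (field; auto). rewrite E. field; auto. }
  assert (N3 : notO q (d2 / d1)).
  { apply notO_of; auto. intros m E. apply (Hdd (- Z.of_nat m)%Z). rewrite zpow_neg. auto. }
  assert (N4 : notO q (d1 / d2)).
  { apply notO_of; auto. intros m E. apply (Hdd (Z.of_nat m)). rewrite zpow_pos.
    pose proof (Cpow_nz q m Hq0).
    replace (d2 / d1) with (/ (d1 / d2)) by (field; auto). rewrite E. field; auto. }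
  assert (FA1 : List.Forall (notO q) (map (fun x => d1 * x) a)).
  { apply Forall_map, Forall_forall. intros x Hx. apply Ha; auto. }
  assert (FA2 : List.Forall (notO q) (map (fun x => d2 * x) a)).
  { apply Forall_map, Forall_forall. intros x Hx. apply Ha; auto. }
  assert (FC1 : List.Forall (notO q) (map (fun x => d1 * x) c)).
  { apply Forall_map, Forall_forall. intros x Hx. apply Hc; auto. }
  assert (FC2 : List.Forall (notO q) (map (fun x => d2 * x) c)).
  { apply Forall_map, Forall_forall. intros x Hx. apply Hc; auto. }
  unfold H. rewrite (Hterm_eq a c d1 d2 q), (Hterm_eq a c d2 d1 q) by auto.
  unfold RHS, jackson. cbv beta zeta.
  assert (Eb : series (fun n : nat => q ^ n *
      (qpochs_inf (map (fun x : C => x * (q ^ n * (s * r) / s))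
            ((q * r :: q * / r :: nil) ++ map (fun x : C => x * (d1 * / r)) a)) q /
       qpochs_inf (map (fun x : C => x * (d1 * / r) * (q ^ n * (s * r) / s)) c) q))
     = qpochs_inf (q * d1 / d2 :: q :: map (fun x => d1 * x) a) q / qpochs_inf (map (fun x => d1 * x) c) q
       * series (fun n => qpochs (map (fun x : C => d1 * x) c) q n /
           qpochs (q * d1 / d2 :: q :: map (fun x : C => d1 * x) a) q n * q ^ n)).
  { rewrite <- (endpoint q s r ((q * r :: q * / r :: nil) ++ map (fun x : C => x * (d1 * / r)) a)
                  (map (fun x : C => x * (d1 * / r)) c)); auto.
    - f_equal. apply FunctionalExtensionality.functional_extensionality. intros n. rewrite (map_map _ _ c). reflexivity.
    - rewrite map_app, map_map. simpl. f_equal. rewrite Hd1e; field; auto.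
      f_equal. field; auto. apply map_ext. intros x. field; auto.
    - rewrite map_map. apply map_ext. intros x. field; auto. }
  assert (Ea : series (fun n : nat => q ^ n *
      (qpochs_inf (map (fun x : C => x * (q ^ n * (s * / r) / s))
            ((q * r :: q * / r :: nil) ++ map (fun x : C => x * (d1 * / r)) a)) q /
       qpochs_inf (map (fun x : C => x * (d1 * / r) * (q ^ n * (s * / r) / s)) c) q))
     = qpochs_inf (q * d2 / d1 :: q :: map (fun x => d2 * x) a) q / qpochs_inf (map (fun x => d2 * x) c) q
       * series (fun n => qpochs (map (fun x : C => d2 * x) c) q n /
           qpochs (q * d2 / d1 :: q :: map (fun x : C => d2 * x) a) q n * q ^ n)).
  { rewrite qpochs_inf_swap.
    replace (fun n => qpochs (map (fun x : C => d2 * x) c) q n /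
           qpochs (q * d2 / d1 :: q :: map (fun x : C => d2 * x) a) q n * q ^ n)
      with (fun n => qpochs (map (fun x : C => d2 * x) c) q n /
           qpochs (q :: q * d2 / d1 :: map (fun x : C => d2 * x) a) q n * q ^ n)
      by (apply FunctionalExtensionality.functional_extensionality; intros n; rewrite qpochs_swap; reflexivity).
    rewrite <- (endpoint q s (/ r) ((q * r :: q * / r :: nil) ++ map (fun x : C => x * (d1 * / r)) a)
                  (map (fun x : C => x * (d1 * / r)) c)); auto.
    - f_equal. apply FunctionalExtensionality.functional_extensionality. intros n. rewrite (map_map _ _ c). reflexivity.
    - rewrite map_app, map_map. simpl. f_equal. field; auto.
      f_equal. rewrite Hd1e; field; auto. apply map_ext. intros x. rewrite Hd1e; field; auto.
    - rewrite map_map. apply map_ext. intros x. rewrite Hd1e; field; auto. }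
  rewrite Ea, Eb. clear Ea Eb.
  rewrite !qpochs_inf_cons. unfold qtheta.
  replace (q / (d2 / d1)) with (q * d1 / d2) by (field; auto).
  rewrite (qpoch_inf_step (d2 / d1) q Hq N3), (qpoch_inf_step (d1 / d2) q Hq N4).
  replace (d2 / d1 * q) with (q * d2 / d1) by (field; auto).
  replace (d1 / d2 * q) with (q * d1 / d2) by (field; auto).
  replace (s * / r) with (s * r * (d2 / d1)) by (rewrite Hd1e; field; auto).
  pose proof (qpoch_inf_nz q q Hq Nq).
  pose proof (qpoch_inf_nz _ q Hq N1).
  pose proof (qpoch_inf_nz _ q Hq N2).
  pose proof (qpochs_inf_nz _ q Hq FC1).
  pose proof (qpochs_inf_nz _ q Hq FC2).
  assert (1 - d2 / d1 <> 0) by (pose proof (N3 0%nat) as K; simpl in K; replace (d2 / d1) with (d2 / d1 * 1) by ring; auto).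
  assert (1 - d1 / d2 <> 0) by (pose proof (N4 0%nat) as K; simpl in K; replace (d1 / d2) with (d1 / d2 * 1) by ring; auto).
  assert (1 - q <> 0) by (pose proof (Nq 0%nat) as K; simpl in K; replace q with (q * 1) by ring; auto).
  assert (d1 - d2 <> 0).
  { intros E. apply H4. assert (E2 : d2 = d1) by (replace d2 with (d1 - (d1 - d2)) by ring; rewrite E; ring).
    rewrite E2. field; auto. }
  assert (d2 - d1 <> 0).
  { intros E. apply H4. assert (E2 : d2 = d1) by (replace d2 with (d1 + (d2 - d1)) by ring; rewrite E; ring).
    rewrite E2. field; auto. }
  assert (d1 - d2 <> 0).
  { intros E. apply H4. assert (E2 : d2 = d1) by (replace d2 with (d1 - (d1 - d2)) by ring; rewrite E; ring).
    rewrite E2. field; auto. }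
  assert (d2 - d1 <> 0).
  { intros E. apply H4. assert (E2 : d2 = d1) by (replace d2 with (d1 + (d2 - d1)) by ring; rewrite E; ring).
    rewrite E2. field; auto. }
  field. repeat split; auto.
Qed.

Lemma zpow_opp (q : C) (m : Z) : q <> 0 -> zpow q (- m) = / zpow q m.
Proof.
  intros Hq. destruct m; simpl.
  - field.
  - reflexivity.
  - pose proof (Cpow_nz q (Pos.to_nat p) Hq). field. auto.
Qed.

Lemma notO_of_notin (q y : C) : q <> 0 -> ~ in_Omega q y -> notO q y.
Proof. intros Hq H. apply notO_of; auto. intros m E. apply H. exists m. auto. Qed.

Theorem theorem2p4 (q : C) (a c : list C) (d1 d2 s r : C) :
  q <> 0 -> (Cmod q < 1)%R ->
  d1 <> 0 -> d2 <> 0 ->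
  (forall m : Z, d2 / d1 <> zpow q m) ->
  (forall x, In x c -> ~ in_Omega q (d1 * x) /\ ~ in_Omega q (d2 * x)) ->
  (forall x, In x a -> ~ in_Omega q (d1 * x) /\ ~ in_Omega q (d2 * x)) ->
  s <> 0 ->
  r * r = d1 / d2 ->
  H a c d1 d2 q = RHS a c d1 d2 r s q /\
  RHS a c d2 d1 (/ r) s q = RHS a c d1 d2 r s q.
Proof.
  intros Hq0 Hq Hd1 Hd2 Hdd Hc Ha Hs Hr.
  assert (Hc' : forall x, In x c -> notO q (d1 * x) /\ notO q (d2 * x)).
  { intros x Hx. destruct (Hc x Hx). split; apply notO_of_notin; auto. }
  assert (Ha' : forall x, In x a -> notO q (d1 * x) /\ notO q (d2 * x)).
  { intros x Hx. destruct (Ha x Hx). split; apply notO_of_notin; auto. }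
  assert (E1 : H a c d1 d2 q = RHS a c d1 d2 r s q) by (apply main_eq; auto).
  split; auto.
  assert (Hd1e : d1 = r * r * d2) by (rewrite Hr; field; auto).
  assert (Hr0 : r <> 0).
  { intros E. apply Hd1. rewrite Hd1e, E. ring. }
  assert (E2 : H a c d2 d1 q = RHS a c d2 d1 (/ r) s q).
  { apply main_eq; auto.
    - intros m E. apply (Hdd (- m)%Z). rewrite zpow_opp by auto. rewrite <- E. field. auto.
    - intros x Hx. destruct (Hc' x Hx). auto.
    - intros x Hx. destruct (Ha' x Hx). auto.
    - rewrite Hd1e. field. auto. }
  rewrite <- E2, <- E1. unfold H. apply Cplus_comm.
Qed.
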